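(* In the construction below, for every $k\in\{0,\dots,K-1\}$ and every $u\in U_k$, $$\sum_{w:(u,w)\in A_k}|B_X(w,\tau^{-(k+1)}/3)|\le|B_X(u,6\tau^{-k})|.$$
   Context: Construction. Let $(X,d)$ be a metric space with $n=|X|\ge2$ and $\mathrm{diam}(X)=1$. For $S\subseteq X$, $r\ge0$: $B_X(S,r):=\{x\in X:\exists s\in S,\ d(x,s)\le r\}$ and $B_X(x,r):=B_X(\{x\},r)$. Let $\varepsilon_0:=\min\{d(x,y):x\ne y\}$, $\tau:=12$, $K:=1+\lceil\log_\tau(1/\varepsilon_0)\rceil$. For $\eta>0$ the greedy $\eta$-net is built as: $N_0=\emptyset$; for $j\ge1$, $S_j:=X\setminus B_X(N_{j-1},\eta)$; if $S_j=\emptyset$ output $N_{j-1}$; else pick $x_j\in S_j$ maximizing $|B_X(x,\eta/3)|$ and set $N_j=N_{j-1}\cup\{x_j\}$. For $k=0,\dots,K$ let $U_k$ be the greedy $\tau^{-k}$-net. For $k<K$, $A_k$ is the set of pairs $(u,u')\in U_k\times U_{k+1}$ with (i) $d(u,u')\le4\tau^{-k}$ and (ii) $|B_X(u,\tau^{-k}/3)|\ge\max\{|B_X(w,\tau^{-k}/3)|:w\in B_X(u',6\tau^{-(k+1)})\}$. *)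

(* Defs.v *)
From HB Require Import structures.
From mathcomp Require Import all_boot all_order all_algebra.
From mathcomp Require Import all_classical all_reals all_analysis.
Set Implicit Arguments. Unset Strict Implicit. Unset Printing Implicit Defensive.
Import Order.TTheory GRing.Theory Num.Theory.
Local Open Scope ring_scope.

Section Defs.
Variables (R : realType) (T : finType) (d : T -> T -> R).

Definition is_metric : Prop :=
  [/\ forall x y, 0 <= d x y,
      forall x y, d x y = 0 <-> x = y,
      forall x y, d x y = d y x &
      forall x y z, d x z <= d x y + d y z].

Definition diam_one : Prop :=
  (forall x y, d x y <= 1) /\ exists x y, d x y = 1.

Definition ballSX (S : {set T}) (r : R) : {set T} :=
  [set x | [exists s in S, d x s <= r]].
Definition ballX (x : T) (r : R) : {set T} := ballSX [set x] r.

(* eps0 = min { d(x,y) : x <> y }; starting the min at 1 is harmless since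
   all distances are <= 1 (diam = 1) and at least one pair is distinct. *)
Definition eps0 : R :=
  \big[Num.min/1]_(p : T * T | p.1 != p.2) d p.1 p.2.

Definition tau : R := 12%:R.

Definition taupow (k : nat) : R := tau ^- k.

Definition Kbound : nat :=
  (1 + `|Num.ceil (ln (eps0^-1) / ln tau)|)%N.

(* N is a possible output of the greedy eta-net procedure:
   there is a sequence of choices x_1,...,x_m (here s`_0,...,s`_(m-1)) with
   x_j in S_j maximizing |B(x, eta/3)| over S_j, where
   S_j = X \ B_X(N_{j-1}, eta), and S_{m+1} is empty, N = N_m. *)
Definition greedy_net (eta : R) (N : {set T}) : Prop :=
  exists s : seq T,
    [/\ N = [set x in s],
        forall (j : nat) (x0 : T), (j < size s)%N ->
          let Sj := ~: ballSX [set x in take j s] eta in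
          let xj := nth x0 s j in
          xj \in Sj /\
          (forall x, x \in Sj -> #|ballX x (eta / 3%:R)| <= #|ballX xj (eta / 3%:R)|)%N &
        ~: ballSX [set x in s] eta = finset.set0].

Definition Arel (U : nat -> {set T}) (k : nat) (u u' : T) : bool :=
  [&& u \in U k, u' \in U k.+1, d u u' <= 4%:R * taupow k &
      [forall w, (d w u' <= 6%:R * taupow k.+1) ==>
         (#|ballX w (taupow k / 3%:R)| <= #|ballX u (taupow k / 3%:R)|)%N]].

End Defs.

(* Main.v *)
Require Import Defs.
From HB Require Import structures.
From mathcomp Require Import all_boot all_order all_algebra.
From mathcomp Require Import all_classical all_reals all_analysis.
From mathcomp Require Import ring lra.
Import Order.TTheory GRing.Theory Num.Theory.
Local Open Scope ring_scope.

Lemma net_sep (R : realType) (T : finType) (d : T -> T -> R) eta N :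
  (forall x y, d x y = d y x) ->
  greedy_net d eta N -> forall a b, a \in N -> b \in N -> a != b -> eta < d a b.
Proof.
move=> dsym [s [-> Hs _]] a' b'.
have key : forall i j, (i < j < size s)%N -> eta < d (nth a' s j) (nth a' s i).
  move=> i j /andP[ij js].
  have [/setCP Hn _] := Hs j a' js.
  rewrite ltNge; apply/negP => Hle; apply: Hn.
  rewrite inE; apply/existsP; exists (nth a' s i); rewrite Hle andbT inE.
  rewrite -(nth_take a' ij); apply: mem_nth.
  by rewrite size_take; case: ifP => // _; apply: leq_trans ij _; apply: ltnW.
rewrite !inE => Ha Hb nab.
have ea := nth_index a' Ha; have eb := nth_index a' Hb.
have ia := Ha; rewrite -index_mem in ia; have ib := Hb; rewrite -index_mem in ib.
case: (ltngtP (index a' s) (index b' s)) => c.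
- by have := key _ _ (introT andP (conj c ib)); rewrite ea eb dsym.
- by have := key _ _ (introT andP (conj c ia)); rewrite ea eb.
- by move: nab; rewrite -ea -eb c eqxx.
Qed.

Theorem claim3p4 (R : realType) (T : finType) (d : T -> T -> R)
  (U : nat -> {set T}) :
  is_metric d -> (1 < #|T|)%N -> diam_one d ->
  (forall k, (k <= Kbound d)%N -> greedy_net d (taupow R k) (U k)) ->
  forall k, (k < Kbound d)%N -> forall u, u \in U k ->
    (\sum_(w | Arel d U k u w) #|ballX d w (taupow R k.+1 / 3%:R)|
       <= #|ballX d u (6%:R * taupow R k)|)%N.
Proof.
move=> [d0 dE dsym tri] _ _ Hnet k kK u uU.
have tp : 0 < taupow R k by rewrite /taupow invr_gt0 exprn_gt0 // /tau ltr0n.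
have tS : taupow R k.+1 = taupow R k / 12%:R by rewrite /taupow exprS invfM mulrC.
have sep := @net_sep R T d _ _ dsym (Hnet k.+1 kK).
have inB : forall x w r, (x \in ballX d w r) = (d x w <= r).
  move=> x w r; rewrite inE; apply/existsP/idP => [[y /andP[]]|h].
    by rewrite inE => /eqP ->.
  by exists w; rewrite inE eqxx.
set A := fun w => Arel d U k u w.
set B := fun w => ballX d w (taupow R k.+1 / 3%:R).
have -> : (\sum_(w | A w) #|B w| = \sum_(w | A w) \sum_x (x \in B w : nat))%N.
  apply: eq_bigr => w _; rewrite -sum1_card big_mkcond /=.
  by apply: eq_bigr => x _; case: (x \in B w).
rewrite exchange_big /= -sum1_card [X in (_ <= X)%N]big_mkcond /=.
apply: leq_sum => x _.
case: (boolP [exists w, A w && (x \in B w)]) => [/existsP[w0 /andP[Aw0 Bw0]]|/existsPn Hn].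
- rewrite (bigD1 w0) //= Bw0 big1 /=.
  + rewrite inB; move: Aw0; rewrite /A /Arel => /and4P[_ _ duw _].
    move: Bw0; rewrite /B inB => dxw.
    suff -> : (d x u <= 6%:R * taupow R k) by [].
    apply: (le_trans (tri _ w0 _)); rewrite (dsym w0 u).
    apply: (le_trans (lerD dxw duw)); rewrite tS.
    rewrite -subr_ge0.
    have -> : 6%:R * taupow R k - (taupow R k / 12%:R / 3%:R + 4%:R * taupow R k) = (71%:R / 36%:R) * taupow R k :> R by field.
    by rewrite mulr_ge0 // ltW.
  + move=> w /andP[Aw nw]; case Bw: (x \in B w) => //.
    exfalso.
    have Uw : w \in U k.+1 by move: Aw; rewrite /A /Arel => /and4P[].
    have Uw0 : w0 \in U k.+1 by move: Aw0; rewrite /A /Arel => /and4P[].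
    have := sep _ _ Uw Uw0 nw.
    move: Bw Bw0; rewrite /B !inB => h1 h2.
    apply/negP; rewrite -leNgt.
    apply: (le_trans (tri _ x _)); rewrite (dsym w x).
    apply: (le_trans (lerD h1 h2)).
    have tp1 : 0 < taupow R k.+1 by rewrite tS divr_gt0 // ltr0n.
    rewrite -subr_ge0.
    have -> : taupow R k.+1 - (taupow R k.+1 / 3%:R + taupow R k.+1 / 3%:R) = taupow R k.+1 / 3%:R by field.
    by rewrite divr_ge0 // ltW.
- rewrite big1 ?leq0n // => w Aw; case Bw: (x \in B w) => //.
  by have := Hn w; rewrite Aw Bw.
Qed.
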